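(* Let $(f_0,\dots,f_4)$ be a rational solution of $A_4(\alpha_0,\dots,\alpha_4)$ some of whose components have a pole at $t=\infty$ (indices modulo 5). (1) If for some $i$, $f_i$ has a pole at $t=\infty$ and $f_{i+1},f_{i+2},f_{i+3},f_{i+4}$ are regular there; or (2) if for some $i$, $f_i,f_{i+1},f_{i+3}$ have a pole at $t=\infty$ and $f_{i+2},f_{i+4}$ are regular there; or (3) if for some $i$, $f_i,f_{i+1},f_{i+2}$ have a pole at $t=\infty$ and $f_{i+3},f_{i+4}$ are regular there; or (4) if all of $f_0,\dots,f_4$ have a pole at $t=\infty$, then the Laurent series of $f_0,\dots,f_4$ at $t=\infty$ are uniquely determined (by the parameters and the case, with its index $i$). Moreover: in case (1), for each $k\in\{1,2,3,4\}$, $f_{i+k}\equiv0$ if $\alpha_{i+k}=0$; in case (2), $f_{i+2}\equiv0$ if $\alpha_{i+2}=0$ and $f_{i+4}\equiv0$ if $\alpha_{i+4}=0$; in case (3), $f_{i+3}\equiv0$ if $\alpha_{i+3}=0$ and $f_{i+4}\equiv0$ if $\alpha_{i+4}=0$.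
   Context: The $A_4^{(1)}$ Painlevé equation $A_4(\alpha_0,\dots,\alpha_4)$ with complex parameters $\alpha_j$ is the system for five functions $f_0,\dots,f_4$ of $t$ (indices in $\mathbb{Z}/5\mathbb{Z}$, ${}'=d/dt$): $f_j'=f_j(f_{j+1}-f_{j+2}+f_{j+3}-f_{j+4})+\alpha_j$ ($j=0,\dots,4$), $f_0+\dots+f_4=t$; hence $\sum_j\alpha_j=1$. A rational solution is a tuple of rational functions of $t$ satisfying it. *)

(* Defs.v *)
From HB Require Import structures.
From mathcomp Require Import all_boot all_order all_algebra.
From mathcomp Require Import generic_quotient fraction.
From mathcomp Require Import reals.
From mathcomp Require Import complex.

Set Implicit Arguments.
Unset Strict Implicit.
Unset Printing Implicit Defensive.

Import Order.TTheory GRing.Theory Num.Theory.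
Local Open Scope ring_scope.

(* Complex numbers: C := R[i] for R : realType (any realType is iso to the
   reals, so R[i] is the field of complex numbers). *)

(* Rational functions of t with complex coefficients: the fraction field of
   C[t].  The variable t is 'X. *)
Notation ratfun R := {fraction {poly (R[i])}}.
Notation "x %:F" := (@FracField.tofrac _ x) : ring_scope.

Section RatFun.
Variable R : realType.
Local Notation C := (R[i]).
Local Notation F := (ratfun R).

Definition rnum (f : F) : {poly C} := \n_(repr f).
Definition rden (f : F) : {poly C} := \d_(repr f).

(* derivative d/dt of a rational function (quotient rule; independent of
   the chosen representative) *)
Definition rderiv (f : F) : F :=
  (((rnum f)^`() * rden f - rnum f * (rden f)^`())%:F) / ((rden f ^+ 2)%:F).

Definition pole_at_infty (f : F) : bool := (size (rden f) < size (rnum f))%N.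
Definition regular_at_infty (f : F) : bool := ~~ pole_at_infty f.

(* Laurent series of f at t = infinity, as the coefficient function
   n |-> coefficient of t^n  (n : int).  For n >= 0 it is the n-th coefficient
   of the polynomial part p %/ q; for n = -(k+1) it is the constant coefficient
   of the polynomial part of t^(k+1) f. *)
Definition laurent_infty (f : F) (n : int) : C :=
  match n with
  | Posz k => (rnum f %/ rden f)`_k
  | Negz k => (('X^(k.+1) * rnum f) %/ rden f)`_0
  end.

Definition sh (i : 'I_5) (k : nat) : 'I_5 := inZp (i + k).

Definition A4_solution (alpha : 'I_5 -> C) (f : 'I_5 -> F) : Prop :=
  (forall j : 'I_5,
      rderiv (f j) = f j * (f (sh j 1) - f (sh j 2) + f (sh j 3) - f (sh j 4))
                     + ((alpha j)%:P)%:F)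
  /\ \sum_(j < 5) f j = ('X)%:F.

Definition case1 (i : 'I_5) (f : 'I_5 -> F) : bool :=
  [&& pole_at_infty (f i), regular_at_infty (f (sh i 1)),
      regular_at_infty (f (sh i 2)), regular_at_infty (f (sh i 3))
    & regular_at_infty (f (sh i 4))].

Definition case2 (i : 'I_5) (f : 'I_5 -> F) : bool :=
  [&& pole_at_infty (f i), pole_at_infty (f (sh i 1)),
      pole_at_infty (f (sh i 3)), regular_at_infty (f (sh i 2))
    & regular_at_infty (f (sh i 4))].

Definition case3 (i : 'I_5) (f : 'I_5 -> F) : bool :=
  [&& pole_at_infty (f i), pole_at_infty (f (sh i 1)),
      pole_at_infty (f (sh i 2)), regular_at_infty (f (sh i 3))
    & regular_at_infty (f (sh i 4))].

Definition case4 (f : 'I_5 -> F) : bool := [forall j, pole_at_infty (f j)].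

(* case number c in {1,2,3,4} with index i (ignored for c = 4) *)
Definition in_case (c : nat) (i : 'I_5) (f : 'I_5 -> F) : bool :=
  match c with
  | 1 => case1 i f
  | 2 => case2 i f
  | 3 => case3 i f
  | 4 => case4 f
  | _ => false
  end%N.

End RatFun.

(* Main.v *)
Require Import Defs.
From HB Require Import structures.
From mathcomp Require Import all_boot all_order all_algebra.
From mathcomp Require Import generic_quotient fraction.
From mathcomp Require Import reals.
From mathcomp Require Import complex.
From mathcomp Require Import ring zify.
Import Order.TTheory GRing.Theory Num.Theory.
Local Open Scope ring_scope.
Local Open Scope quotient_scope.
Set Implicit Arguments.
Unset Strict Implicit.

Lemma frac_rep (K : idomainType) (f : {fraction K}) :
  f * (\d_(repr f))%:F = (\n_(repr f))%:F.
Proof.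
suff H : forall x : {ratio K}, \pi_{fraction K} x * (\d_x)%:F = (\n_x)%:F.
  by rewrite -{1}[f]reprK H.
move=> x; rewrite !piE; apply/eqmodP; rewrite /= FracField.equivfE.
rewrite /FracField.mulf !numden_Ratio ?oner_neq0 ?mulf_neq0 ?denom_ratioP //.
- by rewrite !mulr1 mulrC.
- exact: oner_neq0.
- exact: oner_neq0.
Qed.

Lemma rden_neq0 (R : realType) (f : ratfun R) : rden f != 0.
Proof. exact: denom_ratioP. Qed.

Lemma rep_eq (R : realType) (f : ratfun R) : f = (rnum f)%:F / (rden f)%:F.
Proof.
by rewrite /rnum /rden -frac_rep mulfK // tofrac_eq0 denom_ratioP.
Qed.

Lemma cross (R : realType) (p q p2 q2 : {poly R[i]}) : q != 0 -> q2 != 0 ->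
  p%:F / q%:F = p2%:F / q2%:F :> ratfun R -> p * q2 = p2 * q.
Proof.
move=> q0 q20 /eqP; rewrite eqr_div ?tofrac_eq0 // -!tofracM tofrac_eq.
by move/eqP.
Qed.

Definition Pm (R : realType) (m : int) (f : ratfun R) : Prop :=
  exists p q : {poly R[i]}, q != 0 /\ f = p%:F / q%:F /\
    ((size p)%:Z <= (size q)%:Z + m)%R.
Arguments Pm {R}.

Lemma size_gt0 (R : realType) (q : {poly R[i]}) : q != 0 -> (0 < size q)%N.
Proof. by rewrite size_poly_gt0. Qed.

Lemma P_size (R : realType) (m : int) (f : ratfun R) (p q : {poly R[i]}) : Pm m f -> q != 0 ->
  f = p%:F / q%:F -> p != 0 -> ((size p)%:Z <= (size q)%:Z + m)%R.
Proof.
move=> [p1 [q1 [q10 [ef hs]]]] q0 ef2 p0.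
have E := cross q0 q10 (etrans (esym ef2) ef).
have p10 : p1 != 0.
  apply/eqP=> p1e; move: E; rewrite p1e mul0r => /eqP.
  by rewrite mulf_eq0 (negbTE p0) (negbTE q10).
have hE : size (p * q1) = size (p1 * q) by rewrite E.
move: hE; rewrite !size_mul // => hE.
have a := size_gt0 p0; have b := size_gt0 p10.
have hE2 : (size p + size q1 = size p1 + size q)%N.
  move: hE; case: (size p) a => // n _; case: (size p1) b => // n2 _.
  by rewrite !addSn /= => ->.
lia.
Qed.

Lemma Pm0 (R : realType) (m : int) : Pm m (0 : ratfun R).
Proof.
exists 0, ('X^(absz m)); split; first by rewrite -size_poly_gt0 size_polyXn.
split; first by rewrite tofrac0 mul0r.
rewrite size_poly0 size_polyXn.
have h : - m <= (`|m|%N)%:Z by rewrite abszE -normrN ler_norm.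
lia.
Qed.

Lemma Pm_le (R : realType) (m n : int) (f : ratfun R) : Pm m f -> m <= n -> Pm n f.
Proof.
move=> [p [q [q0 [e h]]]] mn; exists p, q; do 2 split => //; lia.
Qed.

Lemma PmD (R : realType) (m : int) (x y : ratfun R) : Pm m x -> Pm m y -> Pm m (x + y).
Proof.
move=> [p1 [q1 [q10 [e1 h1]]]] [p2 [q2 [q20 [e2 h2]]]].
exists (p1 * q2 + p2 * q1), (q1 * q2); split; first by rewrite mulf_neq0.
split.
  have a : q1%:F != 0 :> ratfun R by rewrite tofrac_eq0.
  have b : q2%:F != 0 :> ratfun R by rewrite tofrac_eq0.
  rewrite e1 e2 (addf_div _ _ a b) tofracD !tofracM; reflexivity.
have k1 : (size (p1 * q2 + p2 * q1)%R <= maxn (size (p1 * q2)%R) (size (p2 * q1)%R))%N := size_polyD _ _.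
have k2 : (size (p1 * q2)%R <= (size p1 + size q2).-1)%N := size_polyMleq _ _.
have k3 : (size (p2 * q1)%R <= (size p2 + size q1).-1)%N := size_polyMleq _ _.
have a := size_gt0 q10; have b := size_gt0 q20.
rewrite size_mul //.
rewrite -!subn1 in k2 k3 *.
move: k1; rewrite leq_max => /orP [] k1; move: k1 k2 k3 a b h1 h2;
  move: (size (p1 * q2 + p2 * q1)) (size (p1 * q2)) (size (p2 * q1)) (size p1) (size p2) (size q1) (size q2);
  intros; lia.
Qed.

Lemma PmN (R : realType) (m : int) (x : ratfun R) : Pm m x -> Pm m (- x).
Proof.
move=> [p [q [q0 [e h]]]]; exists (- p), q; split => //; split.
  rewrite e tofracN mulNr; reflexivity.
by rewrite size_polyN.
Qed.

Lemma PmB (R : realType) (m : int) (x y : ratfun R) : Pm m x -> Pm m y -> Pm m (x - y).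
Proof. by move=> hx hy; apply: PmD => //; apply: PmN. Qed.

Lemma PmM (R : realType) (a b : int) (x y : ratfun R) :
  Pm a x -> Pm b y -> Pm (a + b) (x * y).
Proof.
move=> [p1 [q1 [q10 [e1 h1]]]] [p2 [q2 [q20 [e2 h2]]]].
have [p10|p10] := eqVneq p1 0.
  have -> : x * y = 0 by rewrite e1 p10 tofrac0 !mul0r.
  exact: Pm0.
have [p20|p20] := eqVneq p2 0.
  have -> : x * y = 0 by rewrite e2 p20 tofrac0 mul0r mulr0.
  exact: Pm0.
exists (p1 * p2), (q1 * q2); split; first by rewrite mulf_neq0.
split.
  rewrite e1 e2 mulf_div -!tofracM; reflexivity.
rewrite !size_mul //.
have := size_gt0 p10; have := size_gt0 p20; have := size_gt0 q10; have := size_gt0 q20.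
move: h1 h2; move: (size p1) (size p2) (size q1) (size q2); intros.
rewrite -!subn1; lia.
Qed.

Lemma Pm_cst (R : realType) (c : R[i]) : Pm 0 ((c%:P)%:F : ratfun R).
Proof.
exists c%:P, 1; split; first exact: oner_neq0.
split; first by rewrite tofrac1 divr1.
rewrite size_polyC size_poly1; case: (c != 0) => /=; lia.
Qed.

Lemma Pm_int (R : realType) (k : int) : Pm 0 (k%:~R : ratfun R).
Proof.
have -> : (k%:~R : ratfun R) = (((k%:~R : R[i])%:P)%:F : ratfun R).
  by rewrite !rmorph_int.
exact: Pm_cst.
Qed.

Lemma Pm_X (R : realType) : Pm 1 (('X)%:F : ratfun R).
Proof.
exists 'X, 1; split; first exact: oner_neq0.
split; first by rewrite tofrac1 divr1.
by rewrite size_polyX size_poly1.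
Qed.

Definition vk (R : realType) (f : ratfun R) : int :=
  (size (rnum f))%:Z - (size (rden f))%:Z.

Lemma Pm_vk (R : realType) (f : ratfun R) : Pm (vk f) f.
Proof.
exists (rnum f), (rden f); split; first exact: rden_neq0.
split; first exact: rep_eq.
rewrite /vk; lia.
Qed.

Lemma rnum_neq0 (R : realType) (f : ratfun R) : f != 0 -> rnum f != 0.
Proof.
move=> f0; apply/eqP => e; move: f0; rewrite {1}(rep_eq f) e tofrac0 mul0r.
by rewrite eqxx.
Qed.

Lemma Pm_inv (R : realType) (f : ratfun R) : f != 0 -> Pm (- vk f) f^-1.
Proof.
move=> f0; exists (rden f), (rnum f); split; first exact: rnum_neq0.
split; first by rewrite {1}(rep_eq f) invf_div.
rewrite /vk; lia.
Qed.

Lemma pole_div (R : realType) (m : int) (f S : ratfun R) :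
  f != 0 -> Pm m (f * S) -> Pm (m - vk f) S.
Proof.
move=> f0 h; have -> : S = f^-1 * (f * S) by rewrite mulKf.
rewrite addrC; exact: PmM (Pm_inv f0) h.
Qed.

Lemma Pm_mulX (R : realType) (m : int) (f : ratfun R) :
  Pm m ('X%:F * f) -> Pm (m - 1) f.
Proof.
move=> h.
have [n0|n0] := eqVneq (rnum f) 0.
  have -> : f = 0 by rewrite (rep_eq f) n0 tofrac0 mul0r.
  exact: Pm0.
have e : 'X%:F * f = (rnum f * 'X)%:F / (rden f)%:F.
  by rewrite {1}(rep_eq f) tofracM mulrA [_ * 'X%:F]mulrC.
have := P_size h (rden_neq0 f) e.
rewrite size_mulX // => /(_ (mulf_neq0 n0 (negbT (polyX_eq0 _)))) hs.
exists (rnum f), (rden f); split; first exact: rden_neq0.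
split; first exact: rep_eq.
move: hs; move: (size (rnum f)) (size (rden f)) => a b; lia.
Qed.

Lemma reg_P0 (R : realType) (f : ratfun R) : regular_at_infty f -> Pm 0 f.
Proof.
rewrite /regular_at_infty /pole_at_infty -leqNgt => h.
exists (rnum f), (rden f); split; first exact: rden_neq0.
split; first exact: rep_eq.
move: h; move: (size (rnum f)) (size (rden f)) => a b; lia.
Qed.

Lemma pole_props (R : realType) (f : ratfun R) : pole_at_infty f -> f != 0 /\ 1 <= vk f.
Proof.
rewrite /pole_at_infty => h; split; last first.
  by rewrite /vk; move: h; move: (size (rnum f)) (size (rden f)) => a b; lia.
apply/eqP => f0.
move: (frac_rep f); rewrite {1}f0 mul0r => /esym/eqP; rewrite tofrac_eq0 => /eqP hn.
by move: h; rewrite /rnum hn size_poly0.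
Qed.

Lemma Pm_zero (R : realType) (m0 : int) (f : ratfun R) :
  (forall n : nat, Pm (m0 - n%:Z) f) -> f = 0.
Proof.
move=> h.
have [n0|n0] := eqVneq (rnum f) 0.
  by rewrite (rep_eq f) n0 tofrac0 mul0r.
have := P_size (h (size (rden f) + `|m0|)%N) (rden_neq0 f) (rep_eq f) n0.
have hm : - m0 <= (`|m0|%N)%:Z by rewrite abszE -normrN ler_norm.
have hm2 : m0 <= (`|m0|%N)%:Z by rewrite abszE ler_norm.
have := size_gt0 n0.
move: hm hm2; move: (size (rnum f)) (size (rden f)) (`|m0|%N) => a b c *; exfalso; lia.
Qed.

Lemma Pm_deriv (R : realType) (m : int) (f : ratfun R) : Pm m f -> Pm (m - 1) (rderiv f).
Proof.
move=> h.
have [n0|n0] := eqVneq (rnum f) 0.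
  have -> : rderiv f = 0.
    by rewrite /rderiv n0 deriv0 !mul0r subr0 tofrac0 mul0r.
  exact: Pm0.
have hs := P_size h (rden_neq0 f) (rep_eq f) n0.
set n := rnum f in n0 hs *; set d := rden f in hs *.
have d0 : d != 0 by exact: rden_neq0.
exists (n^`() * d - n * d^`()), (d ^+ 2); split; first by rewrite expf_neq0.
split; first by [].
have k1 : (size (n^`() * d - n * d^`())%R <= maxn (size (n^`() * d)%R) (size (n * d^`())%R))%N.
  by rewrite -(size_polyN (n * d^`())); apply: size_polyD.
have k2 : (size (n^`() * d)%R <= (size n^`() + size d).-1)%N := size_polyMleq _ _.
have k3 : (size (n * d^`())%R <= (size n + size d^`()).-1)%N := size_polyMleq _ _.
have k4 : (size n^`() < size n)%N := lt_size_deriv n0.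
have k5 : (size d^`() < size d)%N := lt_size_deriv d0.
rewrite expr2 size_mul //.
have := size_gt0 n0; have := size_gt0 d0.
rewrite -!subn1 in k2 k3 *.
move: k1; rewrite leq_max => /orP [] k1; move: k1 k2 k3 k4 k5 hs;
  move: (size (n^`() * d - n * d^`())) (size (n^`() * d)) (size (n * d^`())) (size n) (size d) (size n^`()) (size d^`());
  intros; lia.
Qed.

Lemma rderiv_rep (R : realType) (p q : {poly R[i]}) : q != 0 ->
  rderiv (p%:F / q%:F : ratfun R) = (p^`() * q - p * q^`())%:F / (q ^+ 2)%:F.
Proof.
move=> q0.
set f := (p%:F / q%:F : ratfun R).
have b0 := rden_neq0 f.
have E := cross q0 b0 (rep_eq f).
rewrite /rderiv.
move: E b0; move: (rnum f) (rden f) => a b E b0.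
have E' : p^`() * b + p * b^`() = a^`() * q + a * q^`().
  by rewrite -!derivM E.
apply/eqP; rewrite (eqr_div _ _ (_ : _ != 0) (_ : _ != 0)); last first.
- by rewrite tofrac_eq0 expf_neq0.
- by rewrite tofrac_eq0 expf_neq0.
rewrite -!tofracM tofrac_eq; apply/eqP; apply/eqP; rewrite -subr_eq0; apply/eqP.
transitivity (q * b * ((a^`() * q + a * q^`()) - (p^`() * b + p * b^`()))
   + (q^`() * b + q * b^`()) * (p * b - a * q)); first ring.
by rewrite E' E !subrr !mulr0 addr0.
Qed.

Lemma rderivB (R : realType) (x y : ratfun R) : rderiv (x - y) = rderiv x - rderiv y.
Proof.
have b0 := rden_neq0 x; have d0 := rden_neq0 y.
have ex := rep_eq x; have ey := rep_eq y.
have e : x - y = (rnum x * rden y - rnum y * rden x)%:F / (rden x * rden y)%:F.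
  rewrite {1}ex {1}ey -mulNr (addf_div _ _ (_ : _ != 0) (_ : _ != 0)); last first.
  - by rewrite tofrac_eq0.
  - by rewrite tofrac_eq0.
  rewrite tofracB !tofracM mulNr; reflexivity.
rewrite e rderiv_rep ?mulf_neq0 //.
rewrite /rderiv.
move: b0 d0; move: (rnum x) (rden x) (rnum y) (rden y) => a b c d b0 d0.
have bb : (b ^+ 2)%:F != 0 :> ratfun R by rewrite tofrac_eq0 expf_neq0.
have dd : (d ^+ 2)%:F != 0 :> ratfun R by rewrite tofrac_eq0 expf_neq0.
have H : forall u v w z : ratfun R, v != 0 -> z != 0 -> u / v - w / z = (u * z - w * v) / (v * z).
  move=> u v w z v0 z0; rewrite -mulNr (addf_div _ _ v0 z0) mulNr; reflexivity.
rewrite (H _ _ _ _ bb dd).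
apply/eqP; rewrite (eqr_div _ _ (_ : _ != 0) (_ : _ != 0)); last first.
- by rewrite -tofracM tofrac_eq0 mulf_neq0 // expf_neq0.
- by rewrite tofrac_eq0 expf_neq0 // mulf_neq0.
rewrite -!tofracM -tofracB -tofracM tofrac_eq; apply/eqP.
rewrite !derivB !derivM; ring.
Qed.

Lemma sh_val (i : 'I_5) (k : nat) : val (sh i k) = ((i + k) %% 5)%N.
Proof. by []. Qed.

Lemma shD (i : 'I_5) (a b : nat) : sh (sh i a) b = sh i (a + b).
Proof. by apply: val_inj; rewrite !sh_val modnDml addnA. Qed.

Lemma sh0 (i : 'I_5) : sh i 0 = i.
Proof. by apply: val_inj; rewrite sh_val addn0 modn_small. Qed.

Lemma sh5 (i : 'I_5) (k : nat) : sh i (k + 5) = sh i k.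
Proof. by apply: val_inj; rewrite !sh_val addnA modnDr. Qed.

Lemma sh_inj (i : 'I_5) : injective (fun k : 'I_5 => sh i k).
Proof.
move=> a b /(congr1 val); rewrite !sh_val => /eqP.
rewrite eqn_modDl !modn_small // => /eqP e; exact: val_inj.
Qed.

Lemma sum5 (R : realType) (i : 'I_5) (h : 'I_5 -> ratfun R) :
  \sum_(j < 5) h j = h i + h (sh i 1) + h (sh i 2) + h (sh i 3) + h (sh i 4).
Proof.
rewrite (reindex_inj (@sh_inj i)) /=.
rewrite !big_ord_recr big_ord0 /= sh0 add0r; reflexivity.
Qed.

Lemma Pm_zmul (R : realType) (m : int) (k : int) (x : ratfun R) :
  Pm m x -> Pm m (k%:~R * x).
Proof. by move=> h; rewrite -[m]add0r; apply: PmM (Pm_int R k) h. Qed.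

Lemma Pm_unscale (R : realType) (m : int) (k : int) (x : ratfun R) :
  k != 0 -> Pm m (k%:~R * x) -> Pm m x.
Proof.
move=> k0 h.
have kC : (k%:~R : R[i]) != 0 by rewrite intr_eq0.
have ek : (k%:~R : ratfun R) = (((k%:~R : R[i])%:P)%:F) by rewrite !rmorph_int.
have kF : (k%:~R : ratfun R) != 0 by rewrite ek tofrac_eq0 polyC_eq0.
have -> : x = (k%:~R)^-1 * (k%:~R * x) by rewrite mulKf.
rewrite -[m]add0r; apply: PmM h.
exists 1, ((k%:~R : R[i])%:P); split; first by rewrite polyC_eq0.
split.
  by rewrite tofrac1 div1r ek.
by rewrite size_poly1 size_polyC kC.
Qed.

Lemma Pm_sub_le (R : realType) (m : int) (x : ratfun R) : Pm m x -> Pm (m - 1) x -> Pm m x.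
Proof. by []. Qed.

Lemma diff_eq (R : realType) (f g S T A : ratfun R) :
  rderiv f = f * S + A -> rderiv g = g * T + A ->
  rderiv (f - g) = (f - g) * S + g * (S - T).
Proof. by move=> hf hg; rewrite rderivB hf hg; ring. Qed.

Lemma reg_step (R : realType) (m : int) (c : int) (d S g D : ratfun R) :
  rderiv d = d * S + g * D -> Pm m d -> Pm m D -> Pm 0 g ->
  Pm 0 (c%:~R * S - 'X%:F) -> Pm (m - 1) d.
Proof.
move=> e hd hD hg hS; apply: Pm_mulX.
have -> : 'X%:F * d = c%:~R * (rderiv d - g * D) - d * (c%:~R * S - 'X%:F).
  by rewrite e; ring.
apply: PmB; first apply: Pm_zmul; first apply: PmB.
- by apply: Pm_le (Pm_deriv hd) _; lia.
- by rewrite -[m]add0r; apply: PmM.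
- by rewrite -[m]addr0; apply: PmM.
Qed.

Lemma pole_step (R : realType) (m : int) (d S g D : ratfun R) :
  rderiv d = d * S + g * D -> Pm m d -> Pm (-1) S -> pole_at_infty g -> Pm (m - 1) D.
Proof.
move=> e hd hS hg; have [g0 v1] := pole_props hg.
have h : Pm (m - 1) (g * D).
  have -> : g * D = rderiv d - d * S by rewrite e; ring.
  by apply: PmB; [exact: Pm_deriv | apply: PmM].
apply: Pm_le (pole_div g0 h) _; lia.
Qed.

Lemma poleS (R : realType) (f S A : ratfun R) :
  pole_at_infty f -> rderiv f = f * S + A -> Pm 0 A -> Pm (-1) S.
Proof.
move=> hf e hA; have [f0 v1] := pole_props hf.
have h : Pm (vk f - 1) (f * S).
  have -> : f * S = rderiv f - A by rewrite e; ring.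
  apply: PmB; first exact: Pm_deriv (Pm_vk f).
  by apply: Pm_le hA _; lia.
apply: Pm_le (pole_div f0 h) _; lia.
Qed.

Lemma descend (Q : int -> Prop) (m0 : int) :
  Q m0 -> (forall m, Q m -> Q (m - 1)) -> forall n : nat, Q (m0 - n%:Z).
Proof.
move=> h0 hs; elim=> [|n IH]; first by rewrite subr0.
have -> : m0 - (n.+1)%:Z = (m0 - n%:Z) - 1 by lia.
exact: hs.
Qed.

Lemma zero_reg (R : realType) (c : int) (f S : ratfun R) :
  regular_at_infty f -> rderiv f = f * S -> Pm 0 (c%:~R * S - 'X%:F) -> f = 0.
Proof.
move=> hr e hS; apply: (@Pm_zero _ 0); apply: (@descend (fun m => Pm m f) 0 (reg_P0 hr)) => m hm.
apply: (@reg_step _ m c f S 0 0); rewrite ?mul0r ?addr0 //; exact: Pm0.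
Qed.

Lemma desc5 (R : realType) (d0 d1 d2 d3 d4 : ratfun R) :
  (forall m, Pm m d0 /\ Pm m d1 /\ Pm m d2 /\ Pm m d3 /\ Pm m d4 ->
             Pm (m - 1) d0 /\ Pm (m - 1) d1 /\ Pm (m - 1) d2 /\ Pm (m - 1) d3 /\ Pm (m - 1) d4) ->
  [/\ d0 = 0, d1 = 0, d2 = 0, d3 = 0 & d4 = 0].
Proof.
move=> hs.
set M := `|vk d0| + `|vk d1| + `|vk d2| + `|vk d3| + `|vk d4|.
have base : Pm M d0 /\ Pm M d1 /\ Pm M d2 /\ Pm M d3 /\ Pm M d4.
  have l0 := ler_norm (vk d0); have l1 := ler_norm (vk d1); have l2 := ler_norm (vk d2).
  have l3 := ler_norm (vk d3); have l4 := ler_norm (vk d4).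
  have n0 := normr_ge0 (vk d0); have n1 := normr_ge0 (vk d1); have n2 := normr_ge0 (vk d2).
  have n3 := normr_ge0 (vk d3); have n4 := normr_ge0 (vk d4).
  rewrite /M; move: l0 l1 l2 l3 l4 n0 n1 n2 n3 n4.
  move: `|vk d0| `|vk d1| `|vk d2| `|vk d3| `|vk d4| => a0 a1 a2 a3 a4 l0 l1 l2 l3 l4 n0 n1 n2 n3 n4.
  split; [|split; [|split; [|split]]]; apply: Pm_le (Pm_vk _) _; lia.
have hn := @descend (fun m => Pm m d0 /\ Pm m d1 /\ Pm m d2 /\ Pm m d3 /\ Pm m d4) M base hs.
split; apply: (@Pm_zero _ M) => n; by case: (hn n) => [? [? [? [? ?]]]].
Qed.

Lemma core1 (R : realType) (f0 f1 f2 f3 f4 g0 g1 g2 g3 g4 A0 A1 A2 A3 A4 : ratfun R) :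
  rderiv f0 = f0 * (f1 - f2 + f3 - f4) + A0 ->
  rderiv f1 = f1 * (f2 - f3 + f4 - f0) + A1 ->
  rderiv f2 = f2 * (f3 - f4 + f0 - f1) + A2 ->
  rderiv f3 = f3 * (f4 - f0 + f1 - f2) + A3 ->
  rderiv f4 = f4 * (f0 - f1 + f2 - f3) + A4 ->
  rderiv g0 = g0 * (g1 - g2 + g3 - g4) + A0 ->
  rderiv g1 = g1 * (g2 - g3 + g4 - g0) + A1 ->
  rderiv g2 = g2 * (g3 - g4 + g0 - g1) + A2 ->
  rderiv g3 = g3 * (g4 - g0 + g1 - g2) + A3 ->
  rderiv g4 = g4 * (g0 - g1 + g2 - g3) + A4 ->
  f0 + f1 + f2 + f3 + f4 = 'X%:F -> g0 + g1 + g2 + g3 + g4 = 'X%:F ->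
  Pm 0 A0 -> Pm 0 A1 -> Pm 0 A2 -> Pm 0 A3 -> Pm 0 A4 ->
  pole_at_infty f0 -> regular_at_infty f1 -> regular_at_infty f2 -> regular_at_infty f3 -> regular_at_infty f4 ->
  pole_at_infty g0 -> regular_at_infty g1 -> regular_at_infty g2 -> regular_at_infty g3 -> regular_at_infty g4 ->
  [/\ f0 = g0, f1 = g1, f2 = g2, f3 = g3 & f4 = g4].
Proof.
move=> Ef0 Ef1 Ef2 Ef3 Ef4 Eg0 Eg1 Eg2 Eg3 Eg4 sf sg hA0 hA1 hA2 hA3 hA4 pf0 rf1 rf2 rf3 rf4 pg0 rg1 rg2 rg3 rg4.
have hS0' : Pm (-1) (f1 - f2 + f3 - f4) := poleS pf0 Ef0 hA0.
have hS0 : Pm 0 (f1 - f2 + f3 - f4) by apply: Pm_le hS0' _; lia.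
have hf1 : Pm 0 f1 := reg_P0 rf1.
have hf2 : Pm 0 f2 := reg_P0 rf2.
have hf3 : Pm 0 f3 := reg_P0 rf3.
have hf4 : Pm 0 f4 := reg_P0 rf4.
have hc1 : Pm 0 ((-1)%:~R * (f2 - f3 + f4 - f0) - 'X%:F).
  apply: (@Pm_unscale _ _ (1)); first by [].
  have -> : (1)%:~R * ((-1)%:~R * (f2 - f3 + f4 - f0) - 'X%:F) = (2)%:~R * (f1 - f2 + f3 - f4) + (-3)%:~R * f1 + (-2)%:~R * f3
    by rewrite -sf; ring.
  by repeat apply: PmD; apply: Pm_zmul.
have hc2 : Pm 0 ((1)%:~R * (f3 - f4 + f0 - f1) - 'X%:F).
  apply: (@Pm_unscale _ _ (1)); first by [].
  have -> : (1)%:~R * ((1)%:~R * (f3 - f4 + f0 - f1) - 'X%:F) = (2)%:~R * (f1 - f2 + f3 - f4) + (-4)%:~R * f1 + (1)%:~R * f2 + (-2)%:~R * f3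
    by rewrite -sf; ring.
  by repeat apply: PmD; apply: Pm_zmul.
have hc3 : Pm 0 ((-1)%:~R * (f4 - f0 + f1 - f2) - 'X%:F).
  apply: (@Pm_unscale _ _ (1)); first by [].
  have -> : (1)%:~R * ((-1)%:~R * (f4 - f0 + f1 - f2) - 'X%:F) = (2)%:~R * (f1 - f2 + f3 - f4) + (-4)%:~R * f1 + (2)%:~R * f2 + (-3)%:~R * f3
    by rewrite -sf; ring.
  by repeat apply: PmD; apply: Pm_zmul.
have hc4 : Pm 0 ((1)%:~R * (f0 - f1 + f2 - f3) - 'X%:F).
  apply: (@Pm_unscale _ _ (1)); first by [].
  have -> : (1)%:~R * ((1)%:~R * (f0 - f1 + f2 - f3) - 'X%:F) = (1)%:~R * (f1 - f2 + f3 - f4) + (-3)%:~R * f1 + (1)%:~R * f2 + (-3)%:~R * f3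
    by rewrite -sf; ring.
  by repeat apply: PmD; apply: Pm_zmul.
have sd : ((f0 - g0) + (f1 - g1) + (f2 - g2) + (f3 - g3) + (f4 - g4)) = 0.
  transitivity ((f0 + f1 + f2 + f3 + f4) - (g0 + g1 + g2 + g3 + g4)); first ring.
  by rewrite sf sg subrr.
have [z0 z1 z2 z3 z4] : [/\ f0 - g0 = 0, f1 - g1 = 0, f2 - g2 = 0, f3 - g3 = 0 & f4 - g4 = 0].
  apply: desc5 => m [h0 [h1 [h2 [h3 h4]]]].
have hD1 : Pm m ((f2 - f3 + f4 - f0) - (g2 - g3 + g4 - g0)).
  have -> : ((f2 - f3 + f4 - f0) - (g2 - g3 + g4 - g0)) = (-1)%:~R * (f0 - g0) + (1)%:~R * (f2 - g2) + (-1)%:~R * (f3 - g3) + (1)%:~R * (f4 - g4) by ring.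
  by repeat apply: PmD; apply: Pm_zmul.
have n1 : Pm (m - 1) (f1 - g1) := reg_step (c := (-1)) (diff_eq Ef1 Eg1) h1 hD1 (reg_P0 rg1) hc1.
have hD2 : Pm m ((f3 - f4 + f0 - f1) - (g3 - g4 + g0 - g1)).
  have -> : ((f3 - f4 + f0 - f1) - (g3 - g4 + g0 - g1)) = (1)%:~R * (f0 - g0) + (-1)%:~R * (f1 - g1) + (1)%:~R * (f3 - g3) + (-1)%:~R * (f4 - g4) by ring.
  by repeat apply: PmD; apply: Pm_zmul.
have n2 : Pm (m - 1) (f2 - g2) := reg_step (c := (1)) (diff_eq Ef2 Eg2) h2 hD2 (reg_P0 rg2) hc2.
have hD3 : Pm m ((f4 - f0 + f1 - f2) - (g4 - g0 + g1 - g2)).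
  have -> : ((f4 - f0 + f1 - f2) - (g4 - g0 + g1 - g2)) = (-1)%:~R * (f0 - g0) + (1)%:~R * (f1 - g1) + (-1)%:~R * (f2 - g2) + (1)%:~R * (f4 - g4) by ring.
  by repeat apply: PmD; apply: Pm_zmul.
have n3 : Pm (m - 1) (f3 - g3) := reg_step (c := (-1)) (diff_eq Ef3 Eg3) h3 hD3 (reg_P0 rg3) hc3.
have hD4 : Pm m ((f0 - f1 + f2 - f3) - (g0 - g1 + g2 - g3)).
  have -> : ((f0 - f1 + f2 - f3) - (g0 - g1 + g2 - g3)) = (1)%:~R * (f0 - g0) + (-1)%:~R * (f1 - g1) + (1)%:~R * (f2 - g2) + (-1)%:~R * (f3 - g3) by ring.
  by repeat apply: PmD; apply: Pm_zmul.
have n4 : Pm (m - 1) (f4 - g4) := reg_step (c := (1)) (diff_eq Ef4 Eg4) h4 hD4 (reg_P0 rg4) hc4.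
have q0 : Pm (m - 1) ((f1 - f2 + f3 - f4) - (g1 - g2 + g3 - g4)) := pole_step (diff_eq Ef0 Eg0) h0 hS0' pg0.
have sdm : Pm (m - 1) ((f0 - g0) + (f1 - g1) + (f2 - g2) + (f3 - g3) + (f4 - g4)) by rewrite sd; exact: Pm0.
have n0 : Pm (m - 1) (f0 - g0).
  apply: (@Pm_unscale _ _ (1)); first by [].
  have -> : (1)%:~R * (f0 - g0) = (1)%:~R * ((f1 - f2 + f3 - f4) - (g1 - g2 + g3 - g4)) + (-2)%:~R * (f1 - g1) + (-2)%:~R * (f3 - g3) + (1)%:~R * ((f0 - g0) + (f1 - g1) + (f2 - g2) + (f3 - g3) + (f4 - g4)) by ring.
  by repeat apply: PmD; apply: Pm_zmul.
  exact: (conj n0 (conj n1 (conj n2 (conj n3 n4)))).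
split; apply: subr0_eq; assumption.
Qed.

Lemma zero1 (R : realType) (f0 f1 f2 f3 f4 A0 A1 A2 A3 A4 : ratfun R) :
  rderiv f0 = f0 * (f1 - f2 + f3 - f4) + A0 ->
  rderiv f1 = f1 * (f2 - f3 + f4 - f0) + A1 ->
  rderiv f2 = f2 * (f3 - f4 + f0 - f1) + A2 ->
  rderiv f3 = f3 * (f4 - f0 + f1 - f2) + A3 ->
  rderiv f4 = f4 * (f0 - f1 + f2 - f3) + A4 ->
  f0 + f1 + f2 + f3 + f4 = 'X%:F ->
  Pm 0 A0 -> Pm 0 A1 -> Pm 0 A2 -> Pm 0 A3 -> Pm 0 A4 ->
  pole_at_infty f0 -> regular_at_infty f1 -> regular_at_infty f2 -> regular_at_infty f3 -> regular_at_infty f4 ->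
  (A1 = 0 -> f1 = 0) /\ (A2 = 0 -> f2 = 0) /\ (A3 = 0 -> f3 = 0) /\ (A4 = 0 -> f4 = 0).
Proof.
move=> Ef0 Ef1 Ef2 Ef3 Ef4 sf hA0 hA1 hA2 hA3 hA4 pf0 rf1 rf2 rf3 rf4.
have hS0' : Pm (-1) (f1 - f2 + f3 - f4) := poleS pf0 Ef0 hA0.
have hS0 : Pm 0 (f1 - f2 + f3 - f4) by apply: Pm_le hS0' _; lia.
have hf1 : Pm 0 f1 := reg_P0 rf1.
have hf2 : Pm 0 f2 := reg_P0 rf2.
have hf3 : Pm 0 f3 := reg_P0 rf3.
have hf4 : Pm 0 f4 := reg_P0 rf4.
have hc1 : Pm 0 ((-1)%:~R * (f2 - f3 + f4 - f0) - 'X%:F).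
  apply: (@Pm_unscale _ _ (1)); first by [].
  have -> : (1)%:~R * ((-1)%:~R * (f2 - f3 + f4 - f0) - 'X%:F) = (2)%:~R * (f1 - f2 + f3 - f4) + (-3)%:~R * f1 + (-2)%:~R * f3
    by rewrite -sf; ring.
  by repeat apply: PmD; apply: Pm_zmul.
have hc2 : Pm 0 ((1)%:~R * (f3 - f4 + f0 - f1) - 'X%:F).
  apply: (@Pm_unscale _ _ (1)); first by [].
  have -> : (1)%:~R * ((1)%:~R * (f3 - f4 + f0 - f1) - 'X%:F) = (2)%:~R * (f1 - f2 + f3 - f4) + (-4)%:~R * f1 + (1)%:~R * f2 + (-2)%:~R * f3
    by rewrite -sf; ring.
  by repeat apply: PmD; apply: Pm_zmul.
have hc3 : Pm 0 ((-1)%:~R * (f4 - f0 + f1 - f2) - 'X%:F).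
  apply: (@Pm_unscale _ _ (1)); first by [].
  have -> : (1)%:~R * ((-1)%:~R * (f4 - f0 + f1 - f2) - 'X%:F) = (2)%:~R * (f1 - f2 + f3 - f4) + (-4)%:~R * f1 + (2)%:~R * f2 + (-3)%:~R * f3
    by rewrite -sf; ring.
  by repeat apply: PmD; apply: Pm_zmul.
have hc4 : Pm 0 ((1)%:~R * (f0 - f1 + f2 - f3) - 'X%:F).
  apply: (@Pm_unscale _ _ (1)); first by [].
  have -> : (1)%:~R * ((1)%:~R * (f0 - f1 + f2 - f3) - 'X%:F) = (1)%:~R * (f1 - f2 + f3 - f4) + (-3)%:~R * f1 + (1)%:~R * f2 + (-3)%:~R * f3
    by rewrite -sf; ring.
  by repeat apply: PmD; apply: Pm_zmul.
split.
  move=> a0; apply: (zero_reg (c := (-1)) rf1 _ hc1); rewrite Ef1 a0 addr0; reflexivity.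
split.
  move=> a0; apply: (zero_reg (c := (1)) rf2 _ hc2); rewrite Ef2 a0 addr0; reflexivity.
split.
  move=> a0; apply: (zero_reg (c := (-1)) rf3 _ hc3); rewrite Ef3 a0 addr0; reflexivity.
move=> a0; apply: (zero_reg (c := (1)) rf4 _ hc4); rewrite Ef4 a0 addr0; reflexivity.
Qed.

Lemma core2 (R : realType) (f0 f1 f2 f3 f4 g0 g1 g2 g3 g4 A0 A1 A2 A3 A4 : ratfun R) :
  rderiv f0 = f0 * (f1 - f2 + f3 - f4) + A0 ->
  rderiv f1 = f1 * (f2 - f3 + f4 - f0) + A1 ->
  rderiv f2 = f2 * (f3 - f4 + f0 - f1) + A2 ->
  rderiv f3 = f3 * (f4 - f0 + f1 - f2) + A3 ->
  rderiv f4 = f4 * (f0 - f1 + f2 - f3) + A4 ->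
  rderiv g0 = g0 * (g1 - g2 + g3 - g4) + A0 ->
  rderiv g1 = g1 * (g2 - g3 + g4 - g0) + A1 ->
  rderiv g2 = g2 * (g3 - g4 + g0 - g1) + A2 ->
  rderiv g3 = g3 * (g4 - g0 + g1 - g2) + A3 ->
  rderiv g4 = g4 * (g0 - g1 + g2 - g3) + A4 ->
  f0 + f1 + f2 + f3 + f4 = 'X%:F -> g0 + g1 + g2 + g3 + g4 = 'X%:F ->
  Pm 0 A0 -> Pm 0 A1 -> Pm 0 A2 -> Pm 0 A3 -> Pm 0 A4 ->
  pole_at_infty f0 -> pole_at_infty f1 -> pole_at_infty f3 -> regular_at_infty f2 -> regular_at_infty f4 ->
  pole_at_infty g0 -> pole_at_infty g1 -> pole_at_infty g3 -> regular_at_infty g2 -> regular_at_infty g4 ->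
  [/\ f0 = g0, f1 = g1, f2 = g2, f3 = g3 & f4 = g4].
Proof.
move=> Ef0 Ef1 Ef2 Ef3 Ef4 Eg0 Eg1 Eg2 Eg3 Eg4 sf sg hA0 hA1 hA2 hA3 hA4 pf0 pf1 pf3 rf2 rf4 pg0 pg1 pg3 rg2 rg4.
have hS0' : Pm (-1) (f1 - f2 + f3 - f4) := poleS pf0 Ef0 hA0.
have hS0 : Pm 0 (f1 - f2 + f3 - f4) by apply: Pm_le hS0' _; lia.
have hS1' : Pm (-1) (f2 - f3 + f4 - f0) := poleS pf1 Ef1 hA1.
have hS1 : Pm 0 (f2 - f3 + f4 - f0) by apply: Pm_le hS1' _; lia.
have hS3' : Pm (-1) (f4 - f0 + f1 - f2) := poleS pf3 Ef3 hA3.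
have hS3 : Pm 0 (f4 - f0 + f1 - f2) by apply: Pm_le hS3' _; lia.
have hf2 : Pm 0 f2 := reg_P0 rf2.
have hf4 : Pm 0 f4 := reg_P0 rf4.
have hc2 : Pm 0 ((-1)%:~R * (f3 - f4 + f0 - f1) - 'X%:F).
  apply: (@Pm_unscale _ _ (1)); first by [].
  have -> : (1)%:~R * ((-1)%:~R * (f3 - f4 + f0 - f1) - 'X%:F) = (2)%:~R * (f1 - f2 + f3 - f4) + (4)%:~R * (f2 - f3 + f4 - f0) + (-2)%:~R * (f4 - f0 + f1 - f2) + (-5)%:~R * f2
    by rewrite -sf; ring.
  by repeat apply: PmD; apply: Pm_zmul.
have hc4 : Pm 0 ((1)%:~R * (f0 - f1 + f2 - f3) - 'X%:F).
  apply: (@Pm_unscale _ _ (1)); first by [].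
  have -> : (1)%:~R * ((1)%:~R * (f0 - f1 + f2 - f3) - 'X%:F) = (1)%:~R * (f1 - f2 + f3 - f4) + (3)%:~R * (f2 - f3 + f4 - f0) + (-3)%:~R * (f4 - f0 + f1 - f2) + (-5)%:~R * f2
    by rewrite -sf; ring.
  by repeat apply: PmD; apply: Pm_zmul.
have sd : ((f0 - g0) + (f1 - g1) + (f2 - g2) + (f3 - g3) + (f4 - g4)) = 0.
  transitivity ((f0 + f1 + f2 + f3 + f4) - (g0 + g1 + g2 + g3 + g4)); first ring.
  by rewrite sf sg subrr.
have [z0 z1 z2 z3 z4] : [/\ f0 - g0 = 0, f1 - g1 = 0, f2 - g2 = 0, f3 - g3 = 0 & f4 - g4 = 0].
  apply: desc5 => m [h0 [h1 [h2 [h3 h4]]]].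
have hD2 : Pm m ((f3 - f4 + f0 - f1) - (g3 - g4 + g0 - g1)).
  have -> : ((f3 - f4 + f0 - f1) - (g3 - g4 + g0 - g1)) = (1)%:~R * (f0 - g0) + (-1)%:~R * (f1 - g1) + (1)%:~R * (f3 - g3) + (-1)%:~R * (f4 - g4) by ring.
  by repeat apply: PmD; apply: Pm_zmul.
have n2 : Pm (m - 1) (f2 - g2) := reg_step (c := (-1)) (diff_eq Ef2 Eg2) h2 hD2 (reg_P0 rg2) hc2.
have hD4 : Pm m ((f0 - f1 + f2 - f3) - (g0 - g1 + g2 - g3)).
  have -> : ((f0 - f1 + f2 - f3) - (g0 - g1 + g2 - g3)) = (1)%:~R * (f0 - g0) + (-1)%:~R * (f1 - g1) + (1)%:~R * (f2 - g2) + (-1)%:~R * (f3 - g3) by ring.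
  by repeat apply: PmD; apply: Pm_zmul.
have n4 : Pm (m - 1) (f4 - g4) := reg_step (c := (1)) (diff_eq Ef4 Eg4) h4 hD4 (reg_P0 rg4) hc4.
have q0 : Pm (m - 1) ((f1 - f2 + f3 - f4) - (g1 - g2 + g3 - g4)) := pole_step (diff_eq Ef0 Eg0) h0 hS0' pg0.
have q1 : Pm (m - 1) ((f2 - f3 + f4 - f0) - (g2 - g3 + g4 - g0)) := pole_step (diff_eq Ef1 Eg1) h1 hS1' pg1.
have q3 : Pm (m - 1) ((f4 - f0 + f1 - f2) - (g4 - g0 + g1 - g2)) := pole_step (diff_eq Ef3 Eg3) h3 hS3' pg3.
have sdm : Pm (m - 1) ((f0 - g0) + (f1 - g1) + (f2 - g2) + (f3 - g3) + (f4 - g4)) by rewrite sd; exact: Pm0.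
have n0 : Pm (m - 1) (f0 - g0).
  apply: (@Pm_unscale _ _ (1)); first by [].
  have -> : (1)%:~R * (f0 - g0) = (1)%:~R * ((f1 - f2 + f3 - f4) - (g1 - g2 + g3 - g4)) + (2)%:~R * ((f2 - f3 + f4 - f0) - (g2 - g3 + g4 - g0)) + (-2)%:~R * ((f4 - f0 + f1 - f2) - (g4 - g0 + g1 - g2)) + (-4)%:~R * (f2 - g2) + (1)%:~R * ((f0 - g0) + (f1 - g1) + (f2 - g2) + (f3 - g3) + (f4 - g4)) by ring.
  by repeat apply: PmD; apply: Pm_zmul.
have n1 : Pm (m - 1) (f1 - g1).
  apply: (@Pm_unscale _ _ (1)); first by [].
  have -> : (1)%:~R * (f1 - g1) = (2)%:~R * ((f1 - f2 + f3 - f4) - (g1 - g2 + g3 - g4)) + (3)%:~R * ((f2 - f3 + f4 - f0) - (g2 - g3 + g4 - g0)) + (-2)%:~R * ((f4 - f0 + f1 - f2) - (g4 - g0 + g1 - g2)) + (-4)%:~R * (f2 - g2) + (1)%:~R * ((f0 - g0) + (f1 - g1) + (f2 - g2) + (f3 - g3) + (f4 - g4)) by ring.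
  by repeat apply: PmD; apply: Pm_zmul.
have n3 : Pm (m - 1) (f3 - g3).
  apply: (@Pm_unscale _ _ (1)); first by [].
  have -> : (1)%:~R * (f3 - g3) = (-2)%:~R * ((f1 - f2 + f3 - f4) - (g1 - g2 + g3 - g4)) + (-4)%:~R * ((f2 - f3 + f4 - f0) - (g2 - g3 + g4 - g0)) + (3)%:~R * ((f4 - f0 + f1 - f2) - (g4 - g0 + g1 - g2)) + (6)%:~R * (f2 - g2) + (-1)%:~R * ((f0 - g0) + (f1 - g1) + (f2 - g2) + (f3 - g3) + (f4 - g4)) by ring.
  by repeat apply: PmD; apply: Pm_zmul.
  exact: (conj n0 (conj n1 (conj n2 (conj n3 n4)))).
split; apply: subr0_eq; assumption.
Qed.

Lemma zero2 (R : realType) (f0 f1 f2 f3 f4 A0 A1 A2 A3 A4 : ratfun R) :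
  rderiv f0 = f0 * (f1 - f2 + f3 - f4) + A0 ->
  rderiv f1 = f1 * (f2 - f3 + f4 - f0) + A1 ->
  rderiv f2 = f2 * (f3 - f4 + f0 - f1) + A2 ->
  rderiv f3 = f3 * (f4 - f0 + f1 - f2) + A3 ->
  rderiv f4 = f4 * (f0 - f1 + f2 - f3) + A4 ->
  f0 + f1 + f2 + f3 + f4 = 'X%:F ->
  Pm 0 A0 -> Pm 0 A1 -> Pm 0 A2 -> Pm 0 A3 -> Pm 0 A4 ->
  pole_at_infty f0 -> pole_at_infty f1 -> pole_at_infty f3 -> regular_at_infty f2 -> regular_at_infty f4 ->
  (A2 = 0 -> f2 = 0) /\ (A4 = 0 -> f4 = 0).
Proof.
move=> Ef0 Ef1 Ef2 Ef3 Ef4 sf hA0 hA1 hA2 hA3 hA4 pf0 pf1 pf3 rf2 rf4.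
have hS0' : Pm (-1) (f1 - f2 + f3 - f4) := poleS pf0 Ef0 hA0.
have hS0 : Pm 0 (f1 - f2 + f3 - f4) by apply: Pm_le hS0' _; lia.
have hS1' : Pm (-1) (f2 - f3 + f4 - f0) := poleS pf1 Ef1 hA1.
have hS1 : Pm 0 (f2 - f3 + f4 - f0) by apply: Pm_le hS1' _; lia.
have hS3' : Pm (-1) (f4 - f0 + f1 - f2) := poleS pf3 Ef3 hA3.
have hS3 : Pm 0 (f4 - f0 + f1 - f2) by apply: Pm_le hS3' _; lia.
have hf2 : Pm 0 f2 := reg_P0 rf2.
have hf4 : Pm 0 f4 := reg_P0 rf4.
have hc2 : Pm 0 ((-1)%:~R * (f3 - f4 + f0 - f1) - 'X%:F).
  apply: (@Pm_unscale _ _ (1)); first by [].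
  have -> : (1)%:~R * ((-1)%:~R * (f3 - f4 + f0 - f1) - 'X%:F) = (2)%:~R * (f1 - f2 + f3 - f4) + (4)%:~R * (f2 - f3 + f4 - f0) + (-2)%:~R * (f4 - f0 + f1 - f2) + (-5)%:~R * f2
    by rewrite -sf; ring.
  by repeat apply: PmD; apply: Pm_zmul.
have hc4 : Pm 0 ((1)%:~R * (f0 - f1 + f2 - f3) - 'X%:F).
  apply: (@Pm_unscale _ _ (1)); first by [].
  have -> : (1)%:~R * ((1)%:~R * (f0 - f1 + f2 - f3) - 'X%:F) = (1)%:~R * (f1 - f2 + f3 - f4) + (3)%:~R * (f2 - f3 + f4 - f0) + (-3)%:~R * (f4 - f0 + f1 - f2) + (-5)%:~R * f2
    by rewrite -sf; ring.
  by repeat apply: PmD; apply: Pm_zmul.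
split.
  move=> a0; apply: (zero_reg (c := (-1)) rf2 _ hc2); rewrite Ef2 a0 addr0; reflexivity.
move=> a0; apply: (zero_reg (c := (1)) rf4 _ hc4); rewrite Ef4 a0 addr0; reflexivity.
Qed.

Lemma core3 (R : realType) (f0 f1 f2 f3 f4 g0 g1 g2 g3 g4 A0 A1 A2 A3 A4 : ratfun R) :
  rderiv f0 = f0 * (f1 - f2 + f3 - f4) + A0 ->
  rderiv f1 = f1 * (f2 - f3 + f4 - f0) + A1 ->
  rderiv f2 = f2 * (f3 - f4 + f0 - f1) + A2 ->
  rderiv f3 = f3 * (f4 - f0 + f1 - f2) + A3 ->
  rderiv f4 = f4 * (f0 - f1 + f2 - f3) + A4 ->
  rderiv g0 = g0 * (g1 - g2 + g3 - g4) + A0 ->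
  rderiv g1 = g1 * (g2 - g3 + g4 - g0) + A1 ->
  rderiv g2 = g2 * (g3 - g4 + g0 - g1) + A2 ->
  rderiv g3 = g3 * (g4 - g0 + g1 - g2) + A3 ->
  rderiv g4 = g4 * (g0 - g1 + g2 - g3) + A4 ->
  f0 + f1 + f2 + f3 + f4 = 'X%:F -> g0 + g1 + g2 + g3 + g4 = 'X%:F ->
  Pm 0 A0 -> Pm 0 A1 -> Pm 0 A2 -> Pm 0 A3 -> Pm 0 A4 ->
  pole_at_infty f0 -> pole_at_infty f1 -> pole_at_infty f2 -> regular_at_infty f3 -> regular_at_infty f4 ->
  pole_at_infty g0 -> pole_at_infty g1 -> pole_at_infty g2 -> regular_at_infty g3 -> regular_at_infty g4 ->
  [/\ f0 = g0, f1 = g1, f2 = g2, f3 = g3 & f4 = g4].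
Proof.
move=> Ef0 Ef1 Ef2 Ef3 Ef4 Eg0 Eg1 Eg2 Eg3 Eg4 sf sg hA0 hA1 hA2 hA3 hA4 pf0 pf1 pf2 rf3 rf4 pg0 pg1 pg2 rg3 rg4.
have hS0' : Pm (-1) (f1 - f2 + f3 - f4) := poleS pf0 Ef0 hA0.
have hS0 : Pm 0 (f1 - f2 + f3 - f4) by apply: Pm_le hS0' _; lia.
have hS1' : Pm (-1) (f2 - f3 + f4 - f0) := poleS pf1 Ef1 hA1.
have hS1 : Pm 0 (f2 - f3 + f4 - f0) by apply: Pm_le hS1' _; lia.
have hS2' : Pm (-1) (f3 - f4 + f0 - f1) := poleS pf2 Ef2 hA2.
have hS2 : Pm 0 (f3 - f4 + f0 - f1) by apply: Pm_le hS2' _; lia.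
have hf3 : Pm 0 f3 := reg_P0 rf3.
have hf4 : Pm 0 f4 := reg_P0 rf4.
have hc3 : Pm 0 ((-3)%:~R * (f4 - f0 + f1 - f2) - 'X%:F).
  apply: (@Pm_unscale _ _ (1)); first by [].
  have -> : (1)%:~R * ((-3)%:~R * (f4 - f0 + f1 - f2) - 'X%:F) = (2)%:~R * (f1 - f2 + f3 - f4) + (4)%:~R * (f2 - f3 + f4 - f0) + (6)%:~R * (f3 - f4 + f0 - f1) + (-5)%:~R * f3
    by rewrite -sf; ring.
  by repeat apply: PmD; apply: Pm_zmul.
have hc4 : Pm 0 ((3)%:~R * (f0 - f1 + f2 - f3) - 'X%:F).
  apply: (@Pm_unscale _ _ (1)); first by [].
  have -> : (1)%:~R * ((3)%:~R * (f0 - f1 + f2 - f3) - 'X%:F) = (-1)%:~R * (f1 - f2 + f3 - f4) + (1)%:~R * (f2 - f3 + f4 - f0) + (3)%:~R * (f3 - f4 + f0 - f1) + (-5)%:~R * f3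
    by rewrite -sf; ring.
  by repeat apply: PmD; apply: Pm_zmul.
have sd : ((f0 - g0) + (f1 - g1) + (f2 - g2) + (f3 - g3) + (f4 - g4)) = 0.
  transitivity ((f0 + f1 + f2 + f3 + f4) - (g0 + g1 + g2 + g3 + g4)); first ring.
  by rewrite sf sg subrr.
have [z0 z1 z2 z3 z4] : [/\ f0 - g0 = 0, f1 - g1 = 0, f2 - g2 = 0, f3 - g3 = 0 & f4 - g4 = 0].
  apply: desc5 => m [h0 [h1 [h2 [h3 h4]]]].
have hD3 : Pm m ((f4 - f0 + f1 - f2) - (g4 - g0 + g1 - g2)).
  have -> : ((f4 - f0 + f1 - f2) - (g4 - g0 + g1 - g2)) = (-1)%:~R * (f0 - g0) + (1)%:~R * (f1 - g1) + (-1)%:~R * (f2 - g2) + (1)%:~R * (f4 - g4) by ring.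
  by repeat apply: PmD; apply: Pm_zmul.
have n3 : Pm (m - 1) (f3 - g3) := reg_step (c := (-3)) (diff_eq Ef3 Eg3) h3 hD3 (reg_P0 rg3) hc3.
have hD4 : Pm m ((f0 - f1 + f2 - f3) - (g0 - g1 + g2 - g3)).
  have -> : ((f0 - f1 + f2 - f3) - (g0 - g1 + g2 - g3)) = (1)%:~R * (f0 - g0) + (-1)%:~R * (f1 - g1) + (1)%:~R * (f2 - g2) + (-1)%:~R * (f3 - g3) by ring.
  by repeat apply: PmD; apply: Pm_zmul.
have n4 : Pm (m - 1) (f4 - g4) := reg_step (c := (3)) (diff_eq Ef4 Eg4) h4 hD4 (reg_P0 rg4) hc4.
have q0 : Pm (m - 1) ((f1 - f2 + f3 - f4) - (g1 - g2 + g3 - g4)) := pole_step (diff_eq Ef0 Eg0) h0 hS0' pg0.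
have q1 : Pm (m - 1) ((f2 - f3 + f4 - f0) - (g2 - g3 + g4 - g0)) := pole_step (diff_eq Ef1 Eg1) h1 hS1' pg1.
have q2 : Pm (m - 1) ((f3 - f4 + f0 - f1) - (g3 - g4 + g0 - g1)) := pole_step (diff_eq Ef2 Eg2) h2 hS2' pg2.
have sdm : Pm (m - 1) ((f0 - g0) + (f1 - g1) + (f2 - g2) + (f3 - g3) + (f4 - g4)) by rewrite sd; exact: Pm0.
have n0 : Pm (m - 1) (f0 - g0).
  apply: (@Pm_unscale _ _ (3)); first by [].
  have -> : (3)%:~R * (f0 - g0) = (-1)%:~R * ((f1 - f2 + f3 - f4) - (g1 - g2 + g3 - g4)) + (-2)%:~R * ((f2 - f3 + f4 - f0) - (g2 - g3 + g4 - g0)) + (-2)%:~R * (f3 - g3) + (1)%:~R * ((f0 - g0) + (f1 - g1) + (f2 - g2) + (f3 - g3) + (f4 - g4)) by ring.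
  by repeat apply: PmD; apply: Pm_zmul.
have n1 : Pm (m - 1) (f1 - g1).
  apply: (@Pm_unscale _ _ (3)); first by [].
  have -> : (3)%:~R * (f1 - g1) = (2)%:~R * ((f1 - f2 + f3 - f4) - (g1 - g2 + g3 - g4)) + (1)%:~R * ((f2 - f3 + f4 - f0) - (g2 - g3 + g4 - g0)) + (-2)%:~R * (f3 - g3) + (1)%:~R * ((f0 - g0) + (f1 - g1) + (f2 - g2) + (f3 - g3) + (f4 - g4)) by ring.
  by repeat apply: PmD; apply: Pm_zmul.
have n2 : Pm (m - 1) (f2 - g2).
  apply: (@Pm_unscale _ _ (3)); first by [].
  have -> : (3)%:~R * (f2 - g2) = (2)%:~R * ((f1 - f2 + f3 - f4) - (g1 - g2 + g3 - g4)) + (4)%:~R * ((f2 - f3 + f4 - f0) - (g2 - g3 + g4 - g0)) + (3)%:~R * ((f3 - f4 + f0 - f1) - (g3 - g4 + g0 - g1)) + (-2)%:~R * (f3 - g3) + (1)%:~R * ((f0 - g0) + (f1 - g1) + (f2 - g2) + (f3 - g3) + (f4 - g4)) by ring.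
  by repeat apply: PmD; apply: Pm_zmul.
  exact: (conj n0 (conj n1 (conj n2 (conj n3 n4)))).
split; apply: subr0_eq; assumption.
Qed.

Lemma zero3 (R : realType) (f0 f1 f2 f3 f4 A0 A1 A2 A3 A4 : ratfun R) :
  rderiv f0 = f0 * (f1 - f2 + f3 - f4) + A0 ->
  rderiv f1 = f1 * (f2 - f3 + f4 - f0) + A1 ->
  rderiv f2 = f2 * (f3 - f4 + f0 - f1) + A2 ->
  rderiv f3 = f3 * (f4 - f0 + f1 - f2) + A3 ->
  rderiv f4 = f4 * (f0 - f1 + f2 - f3) + A4 ->
  f0 + f1 + f2 + f3 + f4 = 'X%:F ->
  Pm 0 A0 -> Pm 0 A1 -> Pm 0 A2 -> Pm 0 A3 -> Pm 0 A4 ->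
  pole_at_infty f0 -> pole_at_infty f1 -> pole_at_infty f2 -> regular_at_infty f3 -> regular_at_infty f4 ->
  (A3 = 0 -> f3 = 0) /\ (A4 = 0 -> f4 = 0).
Proof.
move=> Ef0 Ef1 Ef2 Ef3 Ef4 sf hA0 hA1 hA2 hA3 hA4 pf0 pf1 pf2 rf3 rf4.
have hS0' : Pm (-1) (f1 - f2 + f3 - f4) := poleS pf0 Ef0 hA0.
have hS0 : Pm 0 (f1 - f2 + f3 - f4) by apply: Pm_le hS0' _; lia.
have hS1' : Pm (-1) (f2 - f3 + f4 - f0) := poleS pf1 Ef1 hA1.
have hS1 : Pm 0 (f2 - f3 + f4 - f0) by apply: Pm_le hS1' _; lia.
have hS2' : Pm (-1) (f3 - f4 + f0 - f1) := poleS pf2 Ef2 hA2.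
have hS2 : Pm 0 (f3 - f4 + f0 - f1) by apply: Pm_le hS2' _; lia.
have hf3 : Pm 0 f3 := reg_P0 rf3.
have hf4 : Pm 0 f4 := reg_P0 rf4.
have hc3 : Pm 0 ((-3)%:~R * (f4 - f0 + f1 - f2) - 'X%:F).
  apply: (@Pm_unscale _ _ (1)); first by [].
  have -> : (1)%:~R * ((-3)%:~R * (f4 - f0 + f1 - f2) - 'X%:F) = (2)%:~R * (f1 - f2 + f3 - f4) + (4)%:~R * (f2 - f3 + f4 - f0) + (6)%:~R * (f3 - f4 + f0 - f1) + (-5)%:~R * f3
    by rewrite -sf; ring.
  by repeat apply: PmD; apply: Pm_zmul.
have hc4 : Pm 0 ((3)%:~R * (f0 - f1 + f2 - f3) - 'X%:F).
  apply: (@Pm_unscale _ _ (1)); first by [].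
  have -> : (1)%:~R * ((3)%:~R * (f0 - f1 + f2 - f3) - 'X%:F) = (-1)%:~R * (f1 - f2 + f3 - f4) + (1)%:~R * (f2 - f3 + f4 - f0) + (3)%:~R * (f3 - f4 + f0 - f1) + (-5)%:~R * f3
    by rewrite -sf; ring.
  by repeat apply: PmD; apply: Pm_zmul.
split.
  move=> a0; apply: (zero_reg (c := (-3)) rf3 _ hc3); rewrite Ef3 a0 addr0; reflexivity.
move=> a0; apply: (zero_reg (c := (3)) rf4 _ hc4); rewrite Ef4 a0 addr0; reflexivity.
Qed.

Lemma core4 (R : realType) (f0 f1 f2 f3 f4 g0 g1 g2 g3 g4 A0 A1 A2 A3 A4 : ratfun R) :
  rderiv f0 = f0 * (f1 - f2 + f3 - f4) + A0 ->
  rderiv f1 = f1 * (f2 - f3 + f4 - f0) + A1 ->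
  rderiv f2 = f2 * (f3 - f4 + f0 - f1) + A2 ->
  rderiv f3 = f3 * (f4 - f0 + f1 - f2) + A3 ->
  rderiv f4 = f4 * (f0 - f1 + f2 - f3) + A4 ->
  rderiv g0 = g0 * (g1 - g2 + g3 - g4) + A0 ->
  rderiv g1 = g1 * (g2 - g3 + g4 - g0) + A1 ->
  rderiv g2 = g2 * (g3 - g4 + g0 - g1) + A2 ->
  rderiv g3 = g3 * (g4 - g0 + g1 - g2) + A3 ->
  rderiv g4 = g4 * (g0 - g1 + g2 - g3) + A4 ->
  f0 + f1 + f2 + f3 + f4 = 'X%:F -> g0 + g1 + g2 + g3 + g4 = 'X%:F ->
  Pm 0 A0 -> Pm 0 A1 -> Pm 0 A2 -> Pm 0 A3 -> Pm 0 A4 ->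
  pole_at_infty f0 -> pole_at_infty f1 -> pole_at_infty f2 -> pole_at_infty f3 -> pole_at_infty f4 ->
  pole_at_infty g0 -> pole_at_infty g1 -> pole_at_infty g2 -> pole_at_infty g3 -> pole_at_infty g4 ->
  [/\ f0 = g0, f1 = g1, f2 = g2, f3 = g3 & f4 = g4].
Proof.
move=> Ef0 Ef1 Ef2 Ef3 Ef4 Eg0 Eg1 Eg2 Eg3 Eg4 sf sg hA0 hA1 hA2 hA3 hA4 pf0 pf1 pf2 pf3 pf4 pg0 pg1 pg2 pg3 pg4.
have hS0' : Pm (-1) (f1 - f2 + f3 - f4) := poleS pf0 Ef0 hA0.
have hS0 : Pm 0 (f1 - f2 + f3 - f4) by apply: Pm_le hS0' _; lia.
have hS1' : Pm (-1) (f2 - f3 + f4 - f0) := poleS pf1 Ef1 hA1.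
have hS1 : Pm 0 (f2 - f3 + f4 - f0) by apply: Pm_le hS1' _; lia.
have hS2' : Pm (-1) (f3 - f4 + f0 - f1) := poleS pf2 Ef2 hA2.
have hS2 : Pm 0 (f3 - f4 + f0 - f1) by apply: Pm_le hS2' _; lia.
have hS3' : Pm (-1) (f4 - f0 + f1 - f2) := poleS pf3 Ef3 hA3.
have hS3 : Pm 0 (f4 - f0 + f1 - f2) by apply: Pm_le hS3' _; lia.
have hS4' : Pm (-1) (f0 - f1 + f2 - f3) := poleS pf4 Ef4 hA4.
have hS4 : Pm 0 (f0 - f1 + f2 - f3) by apply: Pm_le hS4' _; lia.
have sd : ((f0 - g0) + (f1 - g1) + (f2 - g2) + (f3 - g3) + (f4 - g4)) = 0.
  transitivity ((f0 + f1 + f2 + f3 + f4) - (g0 + g1 + g2 + g3 + g4)); first ring.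
  by rewrite sf sg subrr.
have [z0 z1 z2 z3 z4] : [/\ f0 - g0 = 0, f1 - g1 = 0, f2 - g2 = 0, f3 - g3 = 0 & f4 - g4 = 0].
  apply: desc5 => m [h0 [h1 [h2 [h3 h4]]]].
have q0 : Pm (m - 1) ((f1 - f2 + f3 - f4) - (g1 - g2 + g3 - g4)) := pole_step (diff_eq Ef0 Eg0) h0 hS0' pg0.
have q1 : Pm (m - 1) ((f2 - f3 + f4 - f0) - (g2 - g3 + g4 - g0)) := pole_step (diff_eq Ef1 Eg1) h1 hS1' pg1.
have q2 : Pm (m - 1) ((f3 - f4 + f0 - f1) - (g3 - g4 + g0 - g1)) := pole_step (diff_eq Ef2 Eg2) h2 hS2' pg2.
have q3 : Pm (m - 1) ((f4 - f0 + f1 - f2) - (g4 - g0 + g1 - g2)) := pole_step (diff_eq Ef3 Eg3) h3 hS3' pg3.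
have q4 : Pm (m - 1) ((f0 - f1 + f2 - f3) - (g0 - g1 + g2 - g3)) := pole_step (diff_eq Ef4 Eg4) h4 hS4' pg4.
have sdm : Pm (m - 1) ((f0 - g0) + (f1 - g1) + (f2 - g2) + (f3 - g3) + (f4 - g4)) by rewrite sd; exact: Pm0.
have n0 : Pm (m - 1) (f0 - g0).
  apply: (@Pm_unscale _ _ (5)); first by [].
  have -> : (5)%:~R * (f0 - g0) = (-3)%:~R * ((f1 - f2 + f3 - f4) - (g1 - g2 + g3 - g4)) + (-6)%:~R * ((f2 - f3 + f4 - f0) - (g2 - g3 + g4 - g0)) + (-4)%:~R * ((f3 - f4 + f0 - f1) - (g3 - g4 + g0 - g1)) + (-2)%:~R * ((f4 - f0 + f1 - f2) - (g4 - g0 + g1 - g2)) + (1)%:~R * ((f0 - g0) + (f1 - g1) + (f2 - g2) + (f3 - g3) + (f4 - g4)) by ring.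
  by repeat apply: PmD; apply: Pm_zmul.
have n1 : Pm (m - 1) (f1 - g1).
  apply: (@Pm_unscale _ _ (5)); first by [].
  have -> : (5)%:~R * (f1 - g1) = (2)%:~R * ((f1 - f2 + f3 - f4) - (g1 - g2 + g3 - g4)) + (-1)%:~R * ((f2 - f3 + f4 - f0) - (g2 - g3 + g4 - g0)) + (-4)%:~R * ((f3 - f4 + f0 - f1) - (g3 - g4 + g0 - g1)) + (-2)%:~R * ((f4 - f0 + f1 - f2) - (g4 - g0 + g1 - g2)) + (1)%:~R * ((f0 - g0) + (f1 - g1) + (f2 - g2) + (f3 - g3) + (f4 - g4)) by ring.
  by repeat apply: PmD; apply: Pm_zmul.
have n2 : Pm (m - 1) (f2 - g2).
  apply: (@Pm_unscale _ _ (5)); first by [].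
  have -> : (5)%:~R * (f2 - g2) = (2)%:~R * ((f1 - f2 + f3 - f4) - (g1 - g2 + g3 - g4)) + (4)%:~R * ((f2 - f3 + f4 - f0) - (g2 - g3 + g4 - g0)) + (1)%:~R * ((f3 - f4 + f0 - f1) - (g3 - g4 + g0 - g1)) + (-2)%:~R * ((f4 - f0 + f1 - f2) - (g4 - g0 + g1 - g2)) + (1)%:~R * ((f0 - g0) + (f1 - g1) + (f2 - g2) + (f3 - g3) + (f4 - g4)) by ring.
  by repeat apply: PmD; apply: Pm_zmul.
have n3 : Pm (m - 1) (f3 - g3).
  apply: (@Pm_unscale _ _ (5)); first by [].
  have -> : (5)%:~R * (f3 - g3) = (2)%:~R * ((f1 - f2 + f3 - f4) - (g1 - g2 + g3 - g4)) + (4)%:~R * ((f2 - f3 + f4 - f0) - (g2 - g3 + g4 - g0)) + (6)%:~R * ((f3 - f4 + f0 - f1) - (g3 - g4 + g0 - g1)) + (3)%:~R * ((f4 - f0 + f1 - f2) - (g4 - g0 + g1 - g2)) + (1)%:~R * ((f0 - g0) + (f1 - g1) + (f2 - g2) + (f3 - g3) + (f4 - g4)) by ring.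
  by repeat apply: PmD; apply: Pm_zmul.
have n4 : Pm (m - 1) (f4 - g4).
  apply: (@Pm_unscale _ _ (5)); first by [].
  have -> : (5)%:~R * (f4 - g4) = (-3)%:~R * ((f1 - f2 + f3 - f4) - (g1 - g2 + g3 - g4)) + (-1)%:~R * ((f2 - f3 + f4 - f0) - (g2 - g3 + g4 - g0)) + (1)%:~R * ((f3 - f4 + f0 - f1) - (g3 - g4 + g0 - g1)) + (3)%:~R * ((f4 - f0 + f1 - f2) - (g4 - g0 + g1 - g2)) + (1)%:~R * ((f0 - g0) + (f1 - g1) + (f2 - g2) + (f3 - g3) + (f4 - g4)) by ring.
  by repeat apply: PmD; apply: Pm_zmul.
  exact: (conj n0 (conj n1 (conj n2 (conj n3 n4)))).
split; apply: subr0_eq; assumption.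
Qed.


Lemma shk (i : 'I_5) (k l : nat) : sh (sh i k) l = sh i ((k + l) %% 5).
Proof. by apply: val_inj; rewrite !sh_val modnDml modnDmr addnA. Qed.

Lemma sol5 (R : realType) (alpha : 'I_5 -> R[i]) (f : 'I_5 -> ratfun R) (i : 'I_5) :
  A4_solution alpha f ->
  (rderiv (f (sh i 0)) = f (sh i 0) * (f (sh i 1) - f (sh i 2) + f (sh i 3) - f (sh i 4)) + ((alpha (sh i 0))%:P)%:F) /\
  (rderiv (f (sh i 1)) = f (sh i 1) * (f (sh i 2) - f (sh i 3) + f (sh i 4) - f (sh i 0)) + ((alpha (sh i 1))%:P)%:F) /\
  (rderiv (f (sh i 2)) = f (sh i 2) * (f (sh i 3) - f (sh i 4) + f (sh i 0) - f (sh i 1)) + ((alpha (sh i 2))%:P)%:F) /\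
  (rderiv (f (sh i 3)) = f (sh i 3) * (f (sh i 4) - f (sh i 0) + f (sh i 1) - f (sh i 2)) + ((alpha (sh i 3))%:P)%:F) /\
  (rderiv (f (sh i 4)) = f (sh i 4) * (f (sh i 0) - f (sh i 1) + f (sh i 2) - f (sh i 3)) + ((alpha (sh i 4))%:P)%:F) /\
  (f (sh i 0) + f (sh i 1) + f (sh i 2) + f (sh i 3) + f (sh i 4) = 'X%:F).
Proof.
move=> [H S].
split; first by rewrite (H (sh i 0)) !shk; reflexivity.
split; first by rewrite (H (sh i 1)) !shk; reflexivity.
split; first by rewrite (H (sh i 2)) !shk; reflexivity.
split; first by rewrite (H (sh i 3)) !shk; reflexivity.
split; first by rewrite (H (sh i 4)) !shk; reflexivity.
by rewrite -S (sum5 i f) sh0.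
Qed.

Lemma all5 (P : 'I_5 -> Prop) (i : 'I_5) :
  P (sh i 0) -> P (sh i 1) -> P (sh i 2) -> P (sh i 3) -> P (sh i 4) -> forall j, P j.
Proof.
move=> p0 p1 p2 p3 p4 j.
have e : sh i ((j + (5 - i)) %% 5) = j.
  apply: val_inj; rewrite sh_val modnDmr.
  have -> : (i + (j + (5 - i)) = j + 5)%N by have := ltn_ord i; lia.
  by rewrite modnDr modn_small.
have kl : ((j + (5 - i)) %% 5 < 5)%N by rewrite ltn_pmod.
rewrite -e; move: kl; case: ((j + (5 - i)) %% 5)%N => [|[|[|[|[|k]]]]] //.
Qed.

Unset Implicit Arguments.
Close Scope quotient_scope.

Theorem proposition1p3 (R : realType) (alpha : 'I_5 -> R[i]) :
  (* uniqueness of the Laurent series at infinity in each case *)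
  (forall (c : nat) (i : 'I_5) (f g : 'I_5 -> ratfun R),
      A4_solution alpha f -> A4_solution alpha g ->
      in_case c i f -> in_case c i g ->
      forall (j : 'I_5) (n : int), laurent_infty (f j) n = laurent_infty (g j) n)
  /\
  (forall (i : 'I_5) (f : 'I_5 -> ratfun R), A4_solution alpha f ->
      (case1 i f -> forall k : nat, (1 <= k <= 4)%N ->
                    alpha (sh i k) = 0 -> f (sh i k) = 0)
   /\ (case2 i f -> (alpha (sh i 2) = 0 -> f (sh i 2) = 0)
                 /\ (alpha (sh i 4) = 0 -> f (sh i 4) = 0))
   /\ (case3 i f -> (alpha (sh i 3) = 0 -> f (sh i 3) = 0)
                 /\ (alpha (sh i 4) = 0 -> f (sh i 4) = 0))).
Proof.
have hA : forall (i : 'I_5) k, Pm 0 (((alpha (sh i k))%:P)%:F : ratfun R).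
  by move=> i k; exact: Pm_cst.
have hA0 : forall (i : 'I_5) k, alpha (sh i k) = 0 -> (((alpha (sh i k))%:P)%:F : ratfun R) = 0.
  by move=> i k ->; rewrite polyC0 tofrac0.
split.
  move=> c i f g Hf Hg cf cg j n.
  have [Ef0 [Ef1 [Ef2 [Ef3 [Ef4 sf]]]]] := sol5 i Hf.
  have [Eg0 [Eg1 [Eg2 [Eg3 [Eg4 sg]]]]] := sol5 i Hg.
  suff E : forall j, f j = g j by rewrite E.
  move: cf cg; case: c => [|[|[|[|[|c]]]]] //= cf cg.
  - case/and5P: cf => p0 r1 r2 r3 r4; case/and5P: cg => q0 s1 s2 s3 s4.
    have p0' : pole_at_infty (f (sh i 0)) by rewrite sh0.
    have q0' : pole_at_infty (g (sh i 0)) by rewrite sh0.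
    have [z0 z1 z2 z3 z4] := core1 Ef0 Ef1 Ef2 Ef3 Ef4 Eg0 Eg1 Eg2 Eg3 Eg4 sf sg
      (hA i 0) (hA i 1) (hA i 2) (hA i 3) (hA i 4) p0' r1 r2 r3 r4 q0' s1 s2 s3 s4.
    by apply: (@all5 (fun j => f j = g j) i).
  - case/and5P: cf => p0 p1 p3 r2 r4; case/and5P: cg => q0 q1 q3 s2 s4.
    have p0' : pole_at_infty (f (sh i 0)) by rewrite sh0.
    have q0' : pole_at_infty (g (sh i 0)) by rewrite sh0.
    have [z0 z1 z2 z3 z4] := core2 Ef0 Ef1 Ef2 Ef3 Ef4 Eg0 Eg1 Eg2 Eg3 Eg4 sf sg
      (hA i 0) (hA i 1) (hA i 2) (hA i 3) (hA i 4) p0' p1 p3 r2 r4 q0' q1 q3 s2 s4.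
    by apply: (@all5 (fun j => f j = g j) i).
  - case/and5P: cf => p0 p1 p2 r3 r4; case/and5P: cg => q0 q1 q2 s3 s4.
    have p0' : pole_at_infty (f (sh i 0)) by rewrite sh0.
    have q0' : pole_at_infty (g (sh i 0)) by rewrite sh0.
    have [z0 z1 z2 z3 z4] := core3 Ef0 Ef1 Ef2 Ef3 Ef4 Eg0 Eg1 Eg2 Eg3 Eg4 sf sg
      (hA i 0) (hA i 1) (hA i 2) (hA i 3) (hA i 4) p0' p1 p2 r3 r4 q0' q1 q2 s3 s4.
    by apply: (@all5 (fun j => f j = g j) i).
  - move/forallP: cf => cf; move/forallP: cg => cg.
    have [z0 z1 z2 z3 z4] := core4 Ef0 Ef1 Ef2 Ef3 Ef4 Eg0 Eg1 Eg2 Eg3 Eg4 sf sg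
      (hA i 0) (hA i 1) (hA i 2) (hA i 3) (hA i 4) (cf _) (cf _) (cf _) (cf _) (cf _)
      (cg _) (cg _) (cg _) (cg _) (cg _).
    by apply: (@all5 (fun j => f j = g j) i).
move=> i f Hf.
have [Ef0 [Ef1 [Ef2 [Ef3 [Ef4 sf]]]]] := sol5 i Hf.
split.
  case/and5P => p0 r1 r2 r3 r4.
  have p0' : pole_at_infty (f (sh i 0)) by rewrite sh0.
  have [z1 [z2 [z3 z4]]] := zero1 Ef0 Ef1 Ef2 Ef3 Ef4 sf
      (hA i 0) (hA i 1) (hA i 2) (hA i 3) (hA i 4) p0' r1 r2 r3 r4.
  move=> k /andP [k1 k4] a0.
  move: k1 k4 a0; case: k => [|[|[|[|[|k]]]]] //= _ _ a0.
  - exact: z1 (hA0 i 1 a0).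
  - exact: z2 (hA0 i 2 a0).
  - exact: z3 (hA0 i 3 a0).
  - exact: z4 (hA0 i 4 a0).
split.
  case/and5P => p0 p1 p3 r2 r4.
  have p0' : pole_at_infty (f (sh i 0)) by rewrite sh0.
  have [z2 z4] := zero2 Ef0 Ef1 Ef2 Ef3 Ef4 sf
      (hA i 0) (hA i 1) (hA i 2) (hA i 3) (hA i 4) p0' p1 p3 r2 r4.
  by split => a0; [exact: z2 (hA0 i 2 a0) | exact: z4 (hA0 i 4 a0)].
case/and5P => p0 p1 p2 r3 r4.
have p0' : pole_at_infty (f (sh i 0)) by rewrite sh0.
have [z3 z4] := zero3 Ef0 Ef1 Ef2 Ef3 Ef4 sf
    (hA i 0) (hA i 1) (hA i 2) (hA i 3) (hA i 4) p0' p1 p2 r3 r4.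
by split => a0; [exact: z3 (hA0 i 3 a0) | exact: z4 (hA0 i 4 a0)].
Qed.
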